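(* Let $\mathcal T=(\mathbf T^{(1)},\dots,\mathbf T^{(n)})$ be an MPS with contraction $\mathbf T\neq0$, let $1\le j\le n$ and $\epsilon>0$, and let $\hat{\mathbf T}$ be the contraction after replacing $\mathbf T^{(j)}$ by $\mathbf T^{(j)}+\delta^{(j)}$ with $\|\delta^{(j)}\|_F\le\epsilon\|\mathbf T^{(j)}\|_F$. Then $$\frac{\|\mathbf T-\hat{\mathbf T}\|_F}{\|\mathbf T\|_F}\le\epsilon\,\frac{\|T^{[1,j-1]}_{\rightarrow}\|_2\,\|\mathbf T^{(j)}\|_F\,\|T^{[j+1,n]}_{\leftarrow}\|_2}{\|\mathbf T\|_F}+O(\epsilon^2),$$ and if $\mathcal T$ is in canonical form centered at site $j$ then $\frac{\|\mathbf T-\hat{\mathbf T}\|_F}{\|\mathbf T\|_F}\le\epsilon+O(\epsilon^2)$. Both bounds are tight (attained by some admissible $\delta^{(j)}$), and the first bound is always at least $\epsilon$.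
   Context: MPS: an MPS with $n$ sites is a tensor network on a path: site $j$ carries a physical (uncontracted) leg $p_j$, and for $1\le j\le n-1$ a bond (contracted leg) $b_j$ of dimension $D_j$ joins sites $j$ and $j+1$; $\mathbf T^{(1)}$ has legs $(p_1,b_1)$, $\mathbf T^{(n)}$ has legs $(b_{n-1},p_n)$, and $\mathbf T^{(j)}$ for $1<j<n$ has legs $(b_{j-1},p_j,b_j)$. The contraction $\mathbf T$ sums over all bond indices the product of the site entries. For $a\le b$, $\mathbf T^{[a,b]}$ is the contraction of sites $a,\dots,b$ only (its open legs are $p_a,\dots,p_b$ together with $b_{a-1}$ if $a>1$ and $b_b$ if $b<n$). $T^{[1,j-1]}_\rightarrow$ is the matricization of $\mathbf T^{[1,j-1]}$ with rows indexed by $p_1,\dots,p_{j-1}$ and columns by $b_{j-1}$; $T^{[j+1,n]}_\leftarrow$ is the matricization of $\mathbf T^{[j+1,n]}$ with rows indexed by $p_{j+1},\dots,p_n$ and columns by $b_j$. By convention $\|T^{[1,0]}_\rightarrow\|_2=\|T^{[n+1,n]}_\leftarrow\|_2=1$. The environment matrix of site $j$ is the matrix of the linear map $X\mapsto\mathrm{vec}$(contraction with $X$ in place of $\mathbf T^{(j)}$); the MPS is in canonical form centered at site $j$ if this matrix is an isometry. $\|\cdot\|_F$ Frobenius norm, $\|\cdot\|_2$ spectral norm. *)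

(* Defs.v *)
From HB Require Import structures.
From mathcomp Require Import all_boot all_order all_algebra.
From Stdlib Require Import ClassicalEpsilon.
Unset Printing Implicit Defensive.
Import Order.TTheory GRing.Theory Num.Theory.
Local Open Scope ring_scope.

(* Conventions (sites are numbered 1..n as in the paper).                 *)
(*  d k        : dimension of the physical leg p_k  (1 <= k <= n)         *)
(*  D k        : dimension of the bond b_k (1 <= k <= n-1); the boundary  *)
(*               tensors are encoded with dummy bonds b_0, b_n of         *)
(*               dimension D 0 = D n = 1 (imposed as hypotheses).         *)
(*  A k a q b  : entry of T^(k) at (b_{k-1} = a, p_k = q, b_k = b);       *)
(*               only entries with a < D (k-1), q < d k, b < D k are      *)
(*               ever used.                                               *)
(*  A physical configuration is a function p : nat -> nat (p k = index    *)
(*  of leg p_k).                                                          *)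

Definition cfg (d : nat -> nat) (a m : nat) :=
  {dffun forall i : 'I_m, 'I_(d (a + i)%N)}.

Definition cfg_nat {d : nat -> nat} {a m : nat} (c : cfg d a m) : nat -> nat :=
  fun k => if (a <= k)%N then
             match @insub nat (fun x => x < m)%N _ (k - a)%N with
             | Some i => nat_of_ord (c i)
             | None => 0%N
             end
           else 0%N.

(* contraction of the sites a, ..., a+m-1 (a >= 1) for the physical        *)
(* configuration p, with open left bond b_{a-1} = l and right bond         *)
(* b_{a+m-1} = r  (for m = 0 this is the identity on b_{a-1})              *)
Fixpoint seg {R : rcfType} (D : nat -> nat) (A : nat -> nat -> nat -> nat -> R)
    (p : nat -> nat) (a m l r : nat) {struct m} : R :=
  match m with
  | 0 => (l == r)%:R
  | m'.+1 => \sum_(c < D (a + m').-1)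
               seg D A p a m' l c * A (a + m')%N c (p (a + m')%N) r
  end.

Definition contr {R : rcfType} (D : nat -> nat) (n : nat)
    (A : nat -> nat -> nat -> nat -> R) (p : nat -> nat) : R :=
  seg D A p 1 n 0 0.

Definition tnorm {R : rcfType} (d : nat -> nat) (n : nat) (T : (nat -> nat) -> R) : R :=
  Num.sqrt (\sum_(c : cfg d 1 n) T (cfg_nat c) ^+ 2).

Definition snorm {R : rcfType} (d D : nat -> nat) (j : nat)
    (X : nat -> nat -> nat -> R) : R :=
  Num.sqrt (\sum_(a < D j.-1) \sum_(q < d j) \sum_(b < D j) X a q b ^+ 2).

Definition replace {R : rcfType} (A : nat -> nat -> nat -> nat -> R) (j : nat)
    (X : nat -> nat -> nat -> R) : nat -> nat -> nat -> nat -> R :=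
  fun k => if k == j then X else A k.

Definition perturb {R : rcfType} (A : nat -> nat -> nat -> nat -> R) (j : nat)
    (delta : nat -> nat -> nat -> R) :=
  replace A j (fun a q b => A j a q b + delta a q b).

Definition relerr {R : rcfType} (d D : nat -> nat) (n : nat)
    (A : nat -> nat -> nat -> nat -> R) (j : nat) (delta : nat -> nat -> nat -> R) : R :=
  tnorm d n (fun p => contr D n A p - contr D n (perturb A j delta) p)
  / tnorm d n (contr D n A).

Definition vnorm {R : rcfType} {J : finType} (x : J -> R) : R :=
  Num.sqrt (\sum_(i : J) x i ^+ 2).

Definition mxapp {R : rcfType} {I J : finType} (M : I -> J -> R) (x : J -> R) : I -> R :=
  fun i => \sum_(k : J) M i k * x k.

Definition is_specnorm {R : rcfType} {I J : finType} (M : I -> J -> R) (s : R) : Prop :=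
  (forall x : J -> R, vnorm (mxapp M x) <= s * vnorm x) /\
  (forall t : R, (forall x : J -> R, vnorm (mxapp M x) <= t * vnorm x) -> s <= t).

Definition specnorm {R : rcfType} {I J : finType} (M : I -> J -> R) : R :=
  epsilon (inhabits 0) (is_specnorm M).

Definition Lmat {R : rcfType} (d D : nat -> nat) (A : nat -> nat -> nat -> nat -> R)
    (j : nat) : cfg d 1 j.-1 -> 'I_(D j.-1) -> R :=
  fun c b => seg D A (cfg_nat c) 1 j.-1 0 b.

Definition Rmat {R : rcfType} (d D : nat -> nat) (n : nat)
    (A : nat -> nat -> nat -> nat -> R) (j : nat) : cfg d j.+1 (n - j) -> 'I_(D j) -> R :=
  fun c b => seg D A (cfg_nat c) j.+1 (n - j) b 0.

(* canonical form centered at j: the environment map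
   X |-> vec(contraction with X in place of T^(j)) is an isometry *)
Definition canonical_at {R : rcfType} (d D : nat -> nat) (n : nat)
    (A : nat -> nat -> nat -> nat -> R) (j : nat) : Prop :=
  forall X : nat -> nat -> nat -> R,
    tnorm d n (contr D n (replace A j X)) = snorm d D j X.

(* Main.v *)
Require Import Defs.
From HB Require Import structures.
From mathcomp Require Import all_boot all_order all_algebra.
From mathcomp Require Import zify ring lra.
From mathcomp Require Import sesquilinear spectral.
From mathcomp.real_closed Require Import complex.
From Stdlib Require Import FunctionalExtensionality ClassicalEpsilon.
Set Implicit Arguments. Unset Strict Implicit. Unset Printing Implicit Defensive.
Import Order.TTheory GRing.Theory Num.Theory.
Local Open Scope ring_scope.

Section Seg.
Variables (R : rcfType) (D : nat -> nat).

Lemma segS (B : nat -> nat -> nat -> nat -> R) p a m l r :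
  seg D B p a m.+1 l r = \sum_(c < D (a + m).-1) seg D B p a m l c * B (a + m)%N c (p (a + m)%N) r.
Proof. by []. Qed.

Lemma seg_ext (B B' : nat -> nat -> nat -> nat -> R) p p' a m :
  (forall k, (a <= k < a + m)%N -> p k = p' k) ->
  (forall k, (a <= k < a + m)%N -> B k = B' k) ->
  forall l r, seg D B p a m l r = seg D B' p' a m l r.
Proof.
elim: m => [//|m IH] Hp HB l r; rewrite !segS.
apply: eq_bigr => c _; rewrite IH; first last.
- by move=> k /andP[h1 h2]; apply: HB; lia.
- by move=> k /andP[h1 h2]; apply: Hp; lia.
rewrite HB ?Hp //; lia.
Qed.

Lemma seg_split (B : nat -> nat -> nat -> nat -> R) p a m1 m2 :
  forall l r, (r < D (a + m1 + m2).-1)%N ->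
  seg D B p a (m1 + m2) l r =
  \sum_(c < D (a + m1).-1) seg D B p a m1 l c * seg D B p (a + m1) m2 c r.
Proof.
elim: m2 => [|m2 IH] l r Hr.
  rewrite addn0 in Hr; rewrite addn0 /= (bigD1 (Ordinal Hr)) //= eqxx mulr1 big1 ?addr0 // => c /negP Hc.
  case: eqP => [Hce|]; last by rewrite mulr0.
  by exfalso; apply: Hc; apply/eqP; apply: val_inj.
rewrite addnS segS !addnA.
under eq_bigr => c _ do rewrite IH // mulr_suml.
rewrite exchange_big /=; apply: eq_bigr => c' _.
rewrite mulr_sumr; apply: eq_bigr => c _; by rewrite mulrA.
Qed.

End Seg.

Section Fact.
Variables (R : rcfType) (D : nat -> nat).

Lemma seg1 (B : nat -> nat -> nat -> nat -> R) p a l r : (l < D a.-1)%N ->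
  seg D B p a 1 l r = B a l (p a) r.
Proof.
move=> Hl; rewrite segS addn0 (bigD1 (Ordinal Hl)) //= eqxx mul1r big1 ?addr0 //.
move=> c /negP Hc; case: eqP => [Hce|]; last by rewrite mul0r.
by exfalso; apply: Hc; apply/eqP; apply: val_inj.
Qed.

Lemma contr_fact (B : nat -> nat -> nat -> nat -> R) p n j :
  D n = 1%N -> (1 <= j <= n)%N ->
  contr D n B p = \sum_(a < D j.-1) \sum_(b < D j)
     seg D B p 1 j.-1 0 a * B j a (p j) b * seg D B p j.+1 (n - j) b 0.
Proof.
move=> Dn Hj; rewrite /contr.
have Hn : n = (j.-1 + (1 + (n - j)))%N by lia.
rewrite {1}Hn seg_split; last by rewrite (_ : (1 + j.-1 + (1 + (n - j))).-1 = n)%N ?Dn //; lia.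
rewrite (_ : (1 + j.-1 = j)%N); last by lia.
apply: eq_bigr => a _.
rewrite seg_split; last by rewrite (_ : (j + 1 + (n - j)).-1 = n)%N ?Dn //; lia.
rewrite (_ : (j + 1 = j.+1)%N) ?addn1 // (_ : j.+1.-1 = j) //.
rewrite mulr_sumr; apply: eq_bigr => b _.
by rewrite seg1 // mulrA.
Qed.

End Fact.

Lemma triple_big (R : zmodType) (I J K : finType) (F : I -> J -> K -> R) :
  \sum_i \sum_j \sum_k F i j k = \sum_(p : I * (J * K)) F p.1 p.2.1 p.2.2.
Proof.
rewrite -(pair_bigA _ (fun i y => F i y.1 y.2)) /=; apply: eq_bigr => i _.
by rewrite -(pair_bigA _ (fun y z => F i y z)).
Qed.

Section Cfg.
Variable d : nat -> nat.

Lemma cfg_nat_val a m (c : cfg d a m) (i : 'I_m) : cfg_nat c (a + i) = c i.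
Proof. by rewrite /cfg_nat leq_addr addKn valK. Qed.

Lemma cfg_nat_out a m (c : cfg d a m) k : ~~ (a <= k < a + m)%N -> cfg_nat c k = 0%N.
Proof.
move=> hk; rewrite /cfg_nat; case: ifP => // ha.
rewrite insubF //; apply/negP => h; move: hk; rewrite ha /=; lia.
Qed.

Lemma cfg_nat_lt a m (c : cfg d a m) k : (a <= k < a + m)%N -> (cfg_nat c k < d k)%N.
Proof.
move=> /andP[h1 h2]; have H : (k - a < m)%N by lia.
have e := cfg_nat_val c (Ordinal H); have lt := ltn_ord (c (Ordinal H)).
by rewrite -e /= subnKC in lt.
Qed.

Definition mkcfg a m (v : nat -> nat) (H : forall i : 'I_m, (v (a + i) < d (a + i))%N) :
  cfg d a m := finfun (fun i => Ordinal (H i)).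

Lemma cfg_nat_mk a m v (H : forall i : 'I_m, (v (a + i) < d (a + i))%N) k :
  cfg_nat (mkcfg H) k = if (a <= k < a + m)%N then v k else 0%N.
Proof.
case: ifP => hk; last by rewrite cfg_nat_out // hk.
move/andP: hk => [h1 h2]; have H' : (k - a < m)%N by lia.
have e := cfg_nat_val (mkcfg H) (Ordinal H').
have e2 : nat_of_ord (mkcfg H (Ordinal H')) = v (a + (k - a))%N by rewrite /mkcfg ffunE.
rewrite e2 /= subnKC // in e.
Qed.

Lemma cfg_nat_inj a m (c c' : cfg d a m) :
  (forall k, cfg_nat c k = cfg_nat c' k) -> c = c'.
Proof.
move=> h; apply/ffunP => i; apply: val_inj => /=.
by rewrite -!cfg_nat_val h.
Qed.

Lemma restr_lt a m (c : cfg d a m) a' m' : (a <= a')%N -> (a' + m' <= a + m)%N ->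
  forall i : 'I_m', (cfg_nat c (a' + i) < d (a' + i))%N.
Proof. move=> h1 h2 i; apply: cfg_nat_lt; have := ltn_ord i; lia. Qed.

Definition gv j (c1 : cfg d 1 j.-1) (q : 'I_(d j)) n (c2 : cfg d j.+1 (n - j)) : nat -> nat :=
  fun k => if (k < j)%N then cfg_nat c1 k else if k == j then nat_of_ord q else cfg_nat c2 k.

Lemma gv_lt n j c1 q c2 : (1 <= j <= n)%N ->
  forall i : 'I_n, (@gv j c1 q n c2 (1 + i) < d (1 + i))%N.
Proof.
move=> hj i; rewrite /gv; have := ltn_ord i => hi.
case: ifP => h1; first by apply: (cfg_nat_lt c1); lia.
case: eqP => h2; first by have := ltn_ord q; move: (nat_of_ord q) => v; rewrite -h2.
apply: (cfg_nat_lt c2); lia.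
Qed.

Lemma cfg_split (R : zmodType) n j (H : (nat -> nat) -> R) : (1 <= j <= n)%N ->
  \sum_(c : cfg d 1 n) H (cfg_nat c) =
  \sum_(c1 : cfg d 1 j.-1) \sum_(q < d j) \sum_(c2 : cfg d j.+1 (n - j)) H (gv c1 q c2).
Proof.
move=> hj.

pose f (x : cfg d 1 j.-1 * ('I_(d j) * cfg d j.+1 (n - j))) : cfg d 1 n :=
  mkcfg (gv_lt x.1 x.2.1 x.2.2 hj).
have hA : (1 <= 1)%N by [].
have hB : (1 + j.-1 <= 1 + n)%N by lia.
have hC : (j <= n)%N by lia.
have hD : (1 <= j < 1 + n)%N by lia.
have hE : (j.+1 <= j.+1)%N by [].
have hF : (j.+1 + (n - j) <= 1 + n)%N by lia.
pose g (c : cfg d 1 n) : cfg d 1 j.-1 * ('I_(d j) * cfg d j.+1 (n - j)) :=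
  (mkcfg (restr_lt c hA hB), (Ordinal (cfg_nat_lt (k:=j) c hD), mkcfg (restr_lt c (ltn0Sn j) hF))).
have fE x k : cfg_nat (f x) k = gv x.1 x.2.1 x.2.2 k.
  rewrite cfg_nat_mk /gv; case: ifP => hk.
    by case: ltnP => //; case: eqP.
  case: ltnP => h1; first by rewrite cfg_nat_out //; lia.
  case: eqP => h2; first by lia.
  by rewrite cfg_nat_out //; lia.
have fg : cancel g f.
  move=> c; apply: cfg_nat_inj => k; rewrite fE /gv /g /=.
  case: ltnP => h1.
    by rewrite cfg_nat_mk; case: ifP => // hk; rewrite cfg_nat_out //; lia.
  case: eqP => h2; first by rewrite h2.
  by rewrite cfg_nat_mk; case: ifP => // hk; rewrite cfg_nat_out //; lia.
have gf : cancel f g.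
  move=> [c1 [q c2]]; rewrite /g; congr (_, (_, _)).
  - apply: cfg_nat_inj => k; rewrite !cfg_nat_mk /gv /=.
    case: ifP => hk.
      by rewrite (ifT _ _ (_ : (0 < k < 1 + n)%N)) ?(ifT _ _ (_ : (k < j)%N)) //; lia.
    by rewrite cfg_nat_out //; lia.
  - apply: val_inj => /=; rewrite fE /gv /= ltnn eqxx //.
  - apply: cfg_nat_inj => k; rewrite !cfg_nat_mk /gv /=.
    case: ifP => hk.
      rewrite (ifT _ _ (_ : (0 < k < 1 + n)%N)); last by lia.
      by rewrite ifF ?ifF //; [apply/negbTE/eqP|]; lia.
    by rewrite cfg_nat_out //; lia.
rewrite (reindex f); last by exists g => x _; [apply: gf | apply: fg].
rewrite triple_big; apply: eq_bigr => x _.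
congr H; apply: functional_extensionality => k.
by rewrite fE.
Qed.

End Cfg.

Section Spec.
Local Open Scope sesquilinear_scope.
Variable R : rcfType.
Local Notation C := (R[i]).
Local Notation rc := (real_complex R).
Local Notation Re := (@complex.Re R).
Local Notation Im := (@complex.Im R).

Lemma rc_real (a : R) : rc a \is Num.real.
Proof. by rewrite complex_real. Qed.

Lemma conj_rc (a : R) : (rc a)^* = rc a.
Proof. exact: conj_Creal (rc_real a). Qed.

Lemma Re_sum (I : Type) (r : seq I) (F : I -> C) : Re (\sum_(i <- r) F i) = \sum_(i <- r) Re (F i).
Proof. by elim: r => [|x r IH]; rewrite ?big_nil ?big_cons //= -IH; case: (F x); case: (\sum_(j <- r) F j). Qed.

Lemma Im_sum (I : Type) (r : seq I) (F : I -> C) : Im (\sum_(i <- r) F i) = \sum_(i <- r) Im (F i).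
Proof. by elim: r => [|x r IH]; rewrite ?big_nil ?big_cons //= -IH; case: (F x); case: (\sum_(j <- r) F j). Qed.

Lemma Re_mulr (z : C) (a : R) : Re (z * rc a) = Re z * a.
Proof. by case: z => x y /=; rewrite mulr0 subr0. Qed.

Lemma Im_mulr (z : C) (a : R) : Im (z * rc a) = Im z * a.
Proof. by case: z => x y /=; rewrite mulr0 add0r. Qed.

Lemma Re_mull (z : C) (a : R) : Re (rc a * z) = a * Re z.
Proof. by case: z => x y /=; rewrite mul0r subr0. Qed.

Lemma Im_mull (z : C) (a : R) : Im (rc a * z) = a * Im z.
Proof. by case: z => x y /=; rewrite mul0r addr0. Qed.


Lemma Re_mulmx m n (u : 'rV[C]_m) (M : 'M[R]_(m, n)) :
  map_mx Re (u *m map_mx rc M) = map_mx Re u *m M.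
Proof.
apply/rowP => j; rewrite !mxE Re_sum; apply: eq_bigr => i _; by rewrite !mxE Re_mulr.
Qed.

Lemma Im_mulmx m n (u : 'rV[C]_m) (M : 'M[R]_(m, n)) :
  map_mx Im (u *m map_mx rc M) = map_mx Im u *m M.
Proof.
apply/rowP => j; rewrite !mxE Im_sum; apply: eq_bigr => i _; by rewrite !mxE Im_mulr.
Qed.

Lemma Re_scale m (u : 'rV[C]_m) a : map_mx Re (rc a *: u) = a *: map_mx Re u.
Proof. by apply/rowP => j; rewrite !mxE Re_mull. Qed.

Lemma Im_scale m (u : 'rV[C]_m) a : map_mx Im (rc a *: u) = a *: map_mx Im u.
Proof. by apply/rowP => j; rewrite !mxE Im_mull. Qed.

Lemma sym_max k (S : 'M[R]_k.+1) : S^T = S ->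
  exists (lam : R) (v : 'rV[R]_k.+1), v != 0 /\ v *m S = lam *: v /\
  forall x : 'rV_k.+1, (x *m S *m x^T) 0 0 <= lam * (x *m x^T) 0 0.
Proof.
move=> Ssym.
pose SC := map_mx rc S.
have SCh : SC \is hermsymmx.
  apply: realsym_hermsym.
    by apply/is_hermitianmxP; rewrite expr0 scale1r map_mx_id // /SC map_trmx Ssym.
  by apply/mxOverP => i j; rewrite mxE rc_real.
have SCn := hermitian_normalmx SCh.
have SCe : SC = invmx (spectralmx SC) *m diag_mx (spectral_diag SC) *m spectralmx SC by apply/orthomx_spectralP.
have Pu := spectral_unitarymx SC.
have spr := hermitian_spectral_diag_real SCh.
move: SCe; set P := spectralmx SC; set sp := spectral_diag SC => SCe.
rewrite invmx_unitary // in SCe.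
pose mu i := Re (sp 0 i).
have spE i : sp 0 i = rc (mu i) by rewrite RRe_real //; apply: (mxOverP spr).
pose i0 := [arg max_(i > ord0) mu i]%O.
have Hmax : forall i, mu i <= mu i0.
  by rewrite /i0; case: arg_maxP => // j _ Hj i; apply: Hj.
have PPt : P *m P^t* = 1%:M by apply/unitarymxP.
have Hb : forall x : 'rV_k.+1, (x *m S *m x^T) 0 0 <= mu i0 * (x *m x^T) 0 0.
  move=> x; pose xC := map_mx rc x.
  have xCt : xC^t* = map_mx rc x^T by apply/matrixP => i j; rewrite !mxE conj_rc.
  have e1 : rc ((x *m S *m x^T) 0 0) = (xC *m SC *m xC^t*) 0 0.
    by rewrite xCt /xC /SC -!map_mxM [RHS]mxE.
  have e2 : rc ((x *m x^T) 0 0) = (xC *m xC^t*) 0 0.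
    by rewrite xCt /xC -!map_mxM [RHS]mxE.
  pose y := xC *m P^t*.
  have yt : y^t* = P *m xC^t* by rewrite /y trmx_mul map_mxM trmxCK.
  have e3 : xC *m SC *m xC^t* = y *m diag_mx sp *m y^t* by rewrite yt SCe /y !mulmxA.
  have e4 : xC *m xC^t* = y *m y^t* by rewrite yt /y mulmxA mulmxKtV.
  clearbody y.
  pose N i := Re (y 0 i) ^+ 2 + Im (y 0 i) ^+ 2.
  have hN' i : y 0 i * (y^t*) i 0 = rc (N i).
    by rewrite !mxE /N add_Re2_Im2 normCK.
  have hN i : y 0 i * sp 0 i * (y^t*) i 0 = rc (mu i * N i).
    by rewrite mulrAC hN' spE rmorphM mulrC.
  have E1 : (x *m S *m x^T) 0 0 = \sum_i mu i * N i.
    apply: complexI; rewrite e1 e3 mul_mx_diag mxE rmorph_sum; apply: eq_bigr => i _.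
    by rewrite mxE hN.
  have E2 : (x *m x^T) 0 0 = \sum_i N i.
    apply: complexI; rewrite e2 e4 mxE rmorph_sum; apply: eq_bigr => i _.
    by rewrite hN'.
  rewrite E1 E2 mulr_sumr; apply: ler_sum => i _; apply: ler_wpM2r.
    by rewrite /N addr_ge0 // sqr_ge0.
  exact: Hmax.
pose u := row i0 P.
have PS : P *m SC = diag_mx sp *m P by rewrite SCe !mulmxA PPt mul1mx.
have ue : u *m SC = rc (mu i0) *: u.
  by rewrite /u -row_mul PS row_mul row_diag_mx -scalemxAl -rowE spE.
have u0 : u != 0.
  apply/negP => /eqP u0; have := congr1 (row i0) PPt.
  rewrite row_mul -/u u0 mul0mx => /rowP /(_ i0); rewrite !mxE eqxx /= => /eqP.
  by rewrite eq_sym oner_eq0.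
have vrE : map_mx Re u *m S = mu i0 *: map_mx Re u by rewrite -Re_mulmx ue Re_scale.
have viE : map_mx Im u *m S = mu i0 *: map_mx Im u by rewrite -Im_mulmx ue Im_scale.
exists (mu i0).
have [vr0|vrn] := eqVneq (map_mx Re u) 0; last by exists (map_mx Re u).
exists (map_mx Im u); split => //.
apply: contraNneq u0 => /eqP vi0; apply/eqP/rowP => j.
have := congr1 (fun M : 'rV_ _ => M 0 j) vr0; have := congr1 (fun M : 'rV_ _ => M 0 j) (eqP vi0).
by rewrite !mxE /=; case: (P i0 j) => a b /= -> ->.
Qed.

End Spec.

Section SN.
Variable R : rcfType.

Lemma quad_id (I : finType) k (M : I -> 'I_k -> R) (x : 'I_k -> R) :
  ((\row_a x a) *m (\matrix_(a, b) \sum_i M i a * M i b) *m (\row_a x a)^T) 0 0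
  = \sum_i (mxapp M x i) ^+ 2.
Proof.
rewrite mxE; under eq_bigr => b _ do rewrite !mxE mulr_suml.
under eq_bigr => b _ do under eq_bigr => a _ do rewrite !mxE mulr_sumr mulr_suml.
rewrite /mxapp.
under [RHS]eq_bigr => i _ do rewrite expr2 mulr_suml.
under [RHS]eq_bigr => i _ do under eq_bigr => a _ do rewrite mulr_sumr.
rewrite [RHS]exchange_big /=; under [RHS]eq_bigr => a _ do rewrite exchange_big /=.
rewrite [RHS]exchange_big /=; apply: eq_bigr => b _; apply: eq_bigr => a _.
apply: eq_bigr => i _; ring.
Qed.

Lemma nrm_id k (x : 'I_k -> R) :
  ((\row_a x a) *m (\row_a x a)^T) 0 0 = \sum_a x a ^+ 2.
Proof. by rewrite mxE; apply: eq_bigr => a _; rewrite !mxE expr2. Qed.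

Lemma vnorm_ge0 (J : finType) (x : J -> R) : 0 <= vnorm x.
Proof. exact: sqrtr_ge0. Qed.

Lemma vnorm_ext (J : finType) (f g : J -> R) : (forall i, f i = g i) -> vnorm f = vnorm g.
Proof. by move=> h; rewrite /vnorm; congr Num.sqrt; apply: eq_bigr => i _; rewrite h. Qed.

Lemma vnorm_scale (J : finType) (c : R) (f : J -> R) :
  vnorm (fun i => c * f i) = `|c| * vnorm f.
Proof.
rewrite /vnorm; under eq_bigr do rewrite exprMn.
by rewrite -mulr_sumr sqrtrM ?sqr_ge0 // sqrtr_sqr.
Qed.

Lemma mxapp_scale (I J : finType) (M : I -> J -> R) c (x : J -> R) i :
  mxapp M (fun a => c * x a) i = c * mxapp M x i.
Proof. by rewrite /mxapp mulr_sumr; apply: eq_bigr => a _; rewrite mulrCA. Qed.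

Lemma specnorm_spec (I : finType) k (M : I -> 'I_k.+1 -> R) :
  exists s, [/\ is_specnorm M s, 0 <= s & exists x, vnorm x = 1 /\ vnorm (mxapp M x) = s].
Proof.
pose S := \matrix_(a, b) \sum_i M i a * M i b.
have Ssym : S^T = S by apply/matrixP => a b; rewrite !mxE; apply: eq_bigr => i _; rewrite mulrC.
have [lam [v [v0 [vE Hb]]]] := sym_max Ssym.
pose xv a := v 0 a.
have vr : \row_a xv a = v by apply/rowP => a; rewrite mxE.
have Q x : \sum_i (mxapp M x i) ^+ 2 <= lam * \sum_a x a ^+ 2.
  by rewrite -quad_id -nrm_id; apply: Hb.
have Qv : \sum_i (mxapp M xv i) ^+ 2 = lam * \sum_a xv a ^+ 2.
  rewrite -quad_id -nrm_id vr vE -scalemxAl mxE.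
  by [].
have n2pos : 0 < \sum_a xv a ^+ 2.
  rewrite lt_def sumr_ge0 ?andbT; last by move=> a _; exact: sqr_ge0.
  apply: contra v0 => /eqP h; apply/eqP/rowP => a; rewrite mxE.
  apply/eqP; rewrite -sqrf_eq0; apply/eqP.
  by apply: (psumr_eq0P (fun i _ => sqr_ge0 (xv i)) h).
have lam0 : 0 <= lam.
  have : 0 <= lam * \sum_a xv a ^+ 2 by rewrite -Qv sumr_ge0 // => i _; exact: sqr_ge0.
  by rewrite pmulr_lge0.
have sn2 : 0 < Num.sqrt (\sum_a xv a ^+ 2) by rewrite sqrtr_gt0.
exists (Num.sqrt lam); split; last first.
- pose c := (Num.sqrt (\sum_a xv a ^+ 2))^-1.
  have c0 : 0 < c by rewrite invr_gt0.
  exists (fun a => c * xv a); split.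
    by rewrite vnorm_scale gtr0_norm // mulVf // gt_eqF.
  rewrite (vnorm_ext (g := fun i => c * mxapp M xv i)); last by move=> i; rewrite mxapp_scale.
  rewrite vnorm_scale gtr0_norm // /vnorm Qv sqrtrM // mulrCA mulVf ?mulr1 //.
  by rewrite gt_eqF.
- exact: sqrtr_ge0.
split.
  by move=> x; rewrite /vnorm -sqrtrM //; apply: ler_wsqrtr; exact: Q.
move=> t Ht; have := Ht xv; rewrite /vnorm Qv sqrtrM //.
by rewrite ler_pM2r.
Qed.

End SN.

Section Env.
Variables (R : rcfType) (I1 I2 : finType) (kL K kR : nat).
Variables (L : I1 -> 'I_kL -> R) (Rm : I2 -> 'I_kR -> R).

Definition envE (Y : 'I_kL -> 'I_K -> 'I_kR -> R) c1 q c2 :=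
  \sum_a \sum_b L c1 a * Y a q b * Rm c2 b.
Definition NE Y := \sum_c1 \sum_q \sum_c2 (envE Y c1 q c2) ^+ 2.
Definition NN (Y : 'I_kL -> 'I_K -> 'I_kR -> R) := \sum_a \sum_q \sum_b (Y a q b) ^+ 2.

Lemma spec_sq (I J : finType) (M : I -> J -> R) s x : is_specnorm M s -> 0 <= s ->
  \sum_i (mxapp M x i) ^+ 2 <= s ^+ 2 * \sum_j x j ^+ 2.
Proof.
move=> [h _] s0; have := h x; rewrite /vnorm => hx.
have q0 : 0 <= Num.sqrt (\sum_i mxapp M x i ^+ 2) by exact: sqrtr_ge0.
have := ler_pM q0 q0 hx hx.
rewrite -expr2 sqr_sqrtr ?sumr_ge0 // => [|i _]; last exact: sqr_ge0.
by rewrite -expr2 exprMn sqr_sqrtr // sumr_ge0 // => i _; exact: sqr_ge0.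
Qed.

Lemma NE_bound sL sR Y : is_specnorm L sL -> 0 <= sL -> is_specnorm Rm sR -> 0 <= sR ->
  NE Y <= sL ^+ 2 * sR ^+ 2 * NN Y.
Proof.
move=> hL sL0 hR sR0.
pose Z q c2 a := mxapp Rm (fun b => Y a q b) c2.
have EZ c1 q c2 : envE Y c1 q c2 = mxapp L (Z q c2) c1.
  rewrite /envE /mxapp; apply: eq_bigr => a _; rewrite /Z /mxapp mulr_sumr.
  by apply: eq_bigr => b _; ring.
rewrite /NE exchange_big /=.
under eq_bigr => q _ do rewrite exchange_big /=.
apply: (@le_trans _ _ (\sum_q \sum_c2 sL ^+ 2 * \sum_a (Z q c2 a) ^+ 2)).
  apply: ler_sum => q _; apply: ler_sum => c2 _.
  under eq_bigr => c1 _ do rewrite EZ.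
  exact: spec_sq.
under eq_bigr => q _ do rewrite -mulr_sumr exchange_big /=.
rewrite -mulr_sumr -mulrA ler_wpM2l ?sqr_ge0 // /NN exchange_big /= mulr_sumr.
apply: ler_sum => q _; rewrite mulr_sumr; apply: ler_sum => a _.
exact: spec_sq.
Qed.

Lemma NE_scale c Y : NE (fun a q b => c * Y a q b) = c ^+ 2 * NE Y.
Proof.
rewrite /NE mulr_sumr; apply: eq_bigr => c1 _; rewrite mulr_sumr; apply: eq_bigr => q _.
rewrite mulr_sumr; apply: eq_bigr => c2 _; rewrite -exprMn; congr (_ ^+ 2).
rewrite /envE mulr_sumr; apply: eq_bigr => a _; rewrite mulr_sumr; apply: eq_bigr => b _.
ring.
Qed.

Lemma NN_scale c Y : NN (fun a q b => c * Y a q b) = c ^+ 2 * NN Y.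
Proof.
rewrite /NN mulr_sumr; apply: eq_bigr => a _; rewrite mulr_sumr; apply: eq_bigr => q _.
by rewrite mulr_sumr; apply: eq_bigr => b _; rewrite exprMn.
Qed.

Lemma NE_rank1 xL xR q0 :
  NE (fun a q b => if q == q0 then xL a * xR b else 0) =
  (\sum_c1 (mxapp L xL c1) ^+ 2) * (\sum_c2 (mxapp Rm xR c2) ^+ 2).
Proof.
rewrite /NE mulr_suml; apply: eq_bigr => c1 _.
rewrite (bigD1 q0) //= [X in _ + X]big1 ?addr0; last first.
  move=> q /negbTE hq; apply: big1 => c2 _.
  rewrite /envE big1 ?expr0n //= => a _; apply: big1 => b _; by rewrite hq mulr0 mul0r.
rewrite mulr_sumr; apply: eq_bigr => c2 _; rewrite -exprMn; congr (_ ^+ 2).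
rewrite /envE /mxapp mulr_suml; apply: eq_bigr => a _; rewrite mulr_sumr; apply: eq_bigr => b _.
rewrite eqxx; ring.
Qed.

Lemma NN_rank1 xL xR q0 :
  NN (fun a q b => if q == q0 then xL a * xR b else 0) =
  (\sum_a xL a ^+ 2) * (\sum_b xR b ^+ 2).
Proof.
rewrite /NN mulr_suml; apply: eq_bigr => a _.
rewrite (bigD1 q0) //= [X in _ + X]big1 ?addr0; last first.
  by move=> q /negbTE hq; apply: big1 => b _; rewrite hq expr0n.
rewrite mulr_sumr; apply: eq_bigr => b _; by rewrite eqxx exprMn.
Qed.

End Env.

Lemma specnorm_eq (R : rcfType) (I J : finType) (M : I -> J -> R) s :
  is_specnorm M s -> specnorm M = s.
Proof.
move=> hs; have := epsilon_spec (inhabits 0) (is_specnorm M) (ex_intro _ s hs).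
rewrite -/(specnorm M) => [[h1 h2]]; case: hs => h1' h2'.
by apply/eqP; rewrite eq_le h2 ?h2'.
Qed.

Lemma specnorm_spec' (R : rcfType) (I : finType) k (M : I -> 'I_k -> R) : (0 < k)%N ->
  exists s, [/\ is_specnorm M s, 0 <= s & exists x, vnorm x = 1 /\ vnorm (mxapp M x) = s].
Proof. by case: k M => // k M _; exact: specnorm_spec. Qed.

Lemma NE_ext (R : rcfType) (I1 I2 : finType) (kL K kR : nat) (L : I1 -> 'I_kL -> R) (Rm : I2 -> 'I_kR -> R) (Y Y' : 'I_kL -> 'I_K -> 'I_kR -> R) :
  (forall a q b, Y a q b = Y' a q b) -> NE L Rm Y = NE L Rm Y'.
Proof.
move=> h; rewrite /NE /envE; apply: eq_bigr => c1 _; apply: eq_bigr => q _; apply: eq_bigr => c2 _.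
by congr (_ ^+ 2); apply: eq_bigr => a _; apply: eq_bigr => b _; rewrite h.
Qed.

Lemma NN_ext (R : rcfType) (kL K kR : nat) (Y Y' : 'I_kL -> 'I_K -> 'I_kR -> R) :
  (forall a q b, Y a q b = Y' a q b) -> NN Y = NN Y'.
Proof.
by move=> h; rewrite /NN; apply: eq_bigr => a _; apply: eq_bigr => q _; apply: eq_bigr => b _; rewrite h.
Qed.

Definition ext3 (R : rcfType) k1 k2 k3 (Y : 'I_k1 -> 'I_k2 -> 'I_k3 -> R) : nat -> nat -> nat -> R :=
  fun a q b => match insub a, insub q, insub b with
               | Some a', Some q', Some b' => Y a' q' b'
               | _, _, _ => 0 end.

Lemma ext3E (R : rcfType) k1 k2 k3 (Y : 'I_k1 -> 'I_k2 -> 'I_k3 -> R) (a : 'I_k1) (q : 'I_k2) (b : 'I_k3) :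
  ext3 Y a q b = Y a q b.
Proof. by rewrite /ext3 !valK. Qed.

Lemma sum_sq_vnorm (R : rcfType) (J : finType) (x : J -> R) s :
  vnorm x = s -> \sum_i x i ^+ 2 = s ^+ 2.
Proof. by rewrite /vnorm => <-; rewrite sqr_sqrtr // sumr_ge0 // => i _; exact: sqr_ge0. Qed.

Theorem mainTheorem10 (R : rcfType) (n : nat) (d D : nat -> nat)
    (A : nat -> nat -> nat -> nat -> R) (j : nat) :
  D 0%N = 1%N -> D n = 1%N -> (1 <= j <= n)%N ->
  ~ (forall c : cfg d 1 n, contr D n A (cfg_nat c) = 0) ->
  let X := specnorm (Lmat d D A j) * snorm d D j (A j) * specnorm (Rmat d D n A j)
           / tnorm d n (contr D n A) in
  [/\ (* first bound, with an O(eps^2) remainder as eps -> 0 *)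
      (exists (C eps0 : R), 0 < eps0 /\
        forall eps : R, 0 < eps -> eps <= eps0 ->
        forall delta : nat -> nat -> nat -> R,
          snorm d D j delta <= eps * snorm d D j (A j) ->
          relerr d D n A j delta <= eps * X + C * eps ^+ 2),
      (* bound in canonical form centered at j *)
      (canonical_at d D n A j ->
       exists (C eps0 : R), 0 < eps0 /\
        forall eps : R, 0 < eps -> eps <= eps0 ->
        forall delta : nat -> nat -> nat -> R,
          snorm d D j delta <= eps * snorm d D j (A j) ->
          relerr d D n A j delta <= eps + C * eps ^+ 2),
      (* tightness of the first bound *)
      (forall eps : R, 0 < eps ->
       exists delta : nat -> nat -> nat -> R,
         snorm d D j delta <= eps * snorm d D j (A j) /\
         relerr d D n A j delta = eps * X),
      (* tightness of the canonical-form bound *)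
      (canonical_at d D n A j -> forall eps : R, 0 < eps ->
       exists delta : nat -> nat -> nat -> R,
         snorm d D j delta <= eps * snorm d D j (A j) /\
         relerr d D n A j delta = eps)
    & (* the first bound is always at least eps *)
      1 <= X].
Proof.
move=> Dz Dn hj HT X.
set L := Lmat d D A j.
set Rm := Rmat d D n A j.
pose Yo (Y : nat -> nat -> nat -> R) : 'I_(D j.-1) -> 'I_(d j) -> 'I_(D j) -> R :=
  fun a q b => Y a q b.
have F0 : forall B : nat -> nat -> nat -> nat -> R, (forall k, k != j -> B k = A k) ->
    forall c1 q c2, contr D n B (gv c1 q c2) = envE L Rm (Yo (B j)) c1 q c2.
  move=> B HB c1 q c2; rewrite (contr_fact _ _ Dn hj) /envE.
  apply: eq_bigr => a _; apply: eq_bigr => b _.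
  congr (_ * _ * _).
  - rewrite /L /Lmat; apply: seg_ext => k hk.
      by rewrite /gv ifT //; lia.
    by rewrite HB //; apply/eqP => e; move: hk; rewrite e; lia.
  - by rewrite /Yo /gv ltnn eqxx.
  - rewrite /Rm /Rmat; apply: seg_ext => k hk.
      rewrite /gv ifF ?ifF //; [apply/negbTE/eqP => e; move: hk; rewrite e| ]; lia.
    by rewrite HB //; apply/eqP => e; move: hk; rewrite e; lia.
have tsum : forall f : (nat -> nat) -> R, tnorm d n f =
    Num.sqrt (\sum_c1 \sum_(q < d j) \sum_(c2 : cfg d j.+1 (n - j)) f (gv c1 q c2) ^+ 2).
  by move=> f; rewrite /tnorm (cfg_split d (fun p => f p ^+ 2) hj).
have hsumA : \sum_(c : cfg d 1 n) contr D n A (cfg_nat c) ^+ 2 = NE L Rm (Yo (A j)).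
  rewrite (cfg_split d (fun p => contr D n A p ^+ 2) hj) /NE.
  apply: eq_bigr => c1 _; apply: eq_bigr => q _; apply: eq_bigr => c2 _.
  by rewrite (F0 A).
have tT : tnorm d n (contr D n A) = Num.sqrt (NE L Rm (Yo (A j))) by rewrite /tnorm hsumA.
have hrep : forall Y, tnorm d n (contr D n (replace A j Y)) = Num.sqrt (NE L Rm (Yo Y)).
  move=> Y; rewrite tsum /NE; congr Num.sqrt.
  apply: eq_bigr => c1 _; apply: eq_bigr => q _; apply: eq_bigr => c2 _.
  rewrite (F0 (replace A j Y)); first by rewrite /replace eqxx.
  by move=> k hk; rewrite /replace (negbTE hk).
have hdiff : forall delta, tnorm d n (fun p => contr D n A p - contr D n (perturb A j delta) p)
    = Num.sqrt (NE L Rm (Yo delta)).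
  move=> delta; rewrite tsum /NE; congr Num.sqrt.
  apply: eq_bigr => c1 _; apply: eq_bigr => q _; apply: eq_bigr => c2 _.
  rewrite (F0 A) // (F0 (perturb A j delta)); last first.
    by move=> k hk; rewrite /perturb /replace (negbTE hk).
  rewrite /perturb /replace eqxx.
  set e1 := envE _ _ _ _ _ _; set e2 := envE _ _ _ _ _ _; set e3 := envE _ _ _ _ _ _.
  suff -> : e1 - e2 = - e3 by rewrite sqrrN.
  rewrite /e1 /e2 /e3 /envE -sumrB -sumrN; apply: eq_bigr => a _.
  rewrite -sumrB -sumrN; apply: eq_bigr => b _; rewrite /Yo; ring.
have hrel : forall delta, relerr d D n A j delta =
    Num.sqrt (NE L Rm (Yo delta)) / Num.sqrt (NE L Rm (Yo (A j))).
  by move=> delta; rewrite /relerr hdiff tT.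
have NT : 0 < NE L Rm (Yo (A j)).
  rewrite -hsumA.
  case: (boolP [exists c : cfg d 1 n, contr D n A (cfg_nat c) != 0]) => [/existsP [c0 Hc0]|/existsPn H].
    rewrite (bigD1 c0) //=.
    have h1 : 0 < contr D n A (cfg_nat c0) ^+ 2 by rewrite lt0r sqr_ge0 andbT sqrf_eq0.
    have h2 : 0 <= \sum_(i | i != c0) contr D n A (cfg_nat i) ^+ 2.
      by apply: sumr_ge0 => i _; exact: sqr_ge0.
    lra.
  by exfalso; apply: HT => c; apply/eqP; move: (H c); rewrite negbK.
have hDL : (0 < D j.-1)%N.
  case: (posnP (D j.-1)) => // h0; exfalso; move: NT; rewrite /NE big1 ?ltxx // => c1 _.
  apply: big1 => q _; apply: big1 => c2 _; rewrite /envE big1 ?expr0n // => a _.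
  by have := ltn_ord a; move: (nat_of_ord a) => v; rewrite h0.
have hDR : (0 < D j)%N.
  case: (posnP (D j)) => // h0; exfalso; move: NT; rewrite /NE big1 ?ltxx // => c1 _.
  apply: big1 => q _; apply: big1 => c2 _; rewrite /envE big1 ?expr0n // => a _.
  by apply: big1 => b _; have := ltn_ord b; move: (nat_of_ord b) => v; rewrite h0.
have hd : (0 < d j)%N.
  case: (posnP (d j)) => // h0; exfalso; move: NT; rewrite /NE big1 ?ltxx // => c1 _.
  by apply: big1 => -[v hv] _; exfalso; move: hv; rewrite h0.
have [sL [HsL sL0 [xL [xL1 xLs]]]] := specnorm_spec' L hDL.
have [sR [HsR sR0 [xR [xR1 xRs]]]] := specnorm_spec' Rm hDR.
have XE : X = sL * snorm d D j (A j) * sR / Num.sqrt (NE L Rm (Yo (A j))).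
  by rewrite /X -/L -/Rm (specnorm_eq HsL) (specnorm_eq HsR) tT.
rewrite XE; clear X XE.
have snE : forall Y, snorm d D j Y = Num.sqrt (NN (Yo Y)) by [].
have hBs : forall Y, Num.sqrt (NE L Rm (Yo Y)) <= sL * sR * snorm d D j Y.
  move=> Y; apply: le_trans (ler_wsqrtr (NE_bound (Yo Y) HsL sL0 HsR sR0)) _.
  by rewrite snE !sqrtrM ?mulr_ge0 ?sqr_ge0 // -!expr2 !sqr_sqrtr.
set tT0 := Num.sqrt (NE L Rm (Yo (A j))).
have tT0p : 0 < tT0 by rewrite sqrtr_gt0.
set snA := snorm d D j (A j).
have snA0 : 0 <= snA by rewrite /snA snE sqrtr_ge0.
have hcanP : canonical_at d D n A j ->
    (forall Y, Num.sqrt (NE L Rm (Yo Y)) = snorm d D j Y) /\ tT0 = snA.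
  move=> hc; have h Y : Num.sqrt (NE L Rm (Yo Y)) = snorm d D j Y.
    by rewrite -hrep; exact: hc.
  by split => //; rewrite /tT0 h.
split.
- exists 0, 1; split => [|eps e0 e1 delta hdel]; first exact: ltr01.
  rewrite hrel -/tT0 mul0r addr0.
  have h1 := le_trans (hBs delta) (ler_wpM2l (mulr_ge0 sL0 sR0) hdel).
  have -> : eps * (sL * snA * sR / tT0) = (sL * sR * (eps * snA)) / tT0 by ring.
  by rewrite ler_wpM2r // invr_ge0 ltW.
- move=> /hcanP [hcan tE].
  exists 0, 1; split => [|eps e0 e1 delta hdel]; first exact: ltr01.
  rewrite hrel -/tT0 hcan mul0r addr0 ler_pdivrMr // tE; exact: hdel.
- move=> eps e0.
  pose q0 := Ordinal hd.
  pose Y0 := fun (a : 'I_(D j.-1)) (q : 'I_(d j)) (b : 'I_(D j)) =>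
    if q == q0 then xL a * xR b else 0.
  pose c := eps * snA.
  have c0 : 0 <= c by rewrite mulr_ge0 // ltW.
  exists (fun a q b => c * ext3 Y0 a q b).
  have eY : forall a q b, Yo (fun a q b => c * ext3 Y0 a q b) a q b = c * Y0 a q b.
    by move=> a q b; rewrite /Yo ext3E.
  have hNN : NN (Yo (fun a q b => c * ext3 Y0 a q b)) = c ^+ 2.
    rewrite (NN_ext eY) NN_scale /Y0 NN_rank1 (sum_sq_vnorm xL1) (sum_sq_vnorm xR1).
    by rewrite expr1n !mulr1.
  have hNE : NE L Rm (Yo (fun a q b => c * ext3 Y0 a q b)) = c ^+ 2 * (sL ^+ 2 * sR ^+ 2).
    by rewrite (NE_ext _ _ eY) NE_scale /Y0 NE_rank1 (sum_sq_vnorm xLs) (sum_sq_vnorm xRs).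
  split; first by rewrite snE hNN sqrtr_sqr ger0_norm.
  rewrite hrel -/tT0 hNE (sqrtrM _ (sqr_ge0 c)) (sqrtrM _ (sqr_ge0 sL)) !sqrtr_sqr !ger0_norm // /c.
  ring.
- move=> /hcanP [hcan tE] eps e0.
  exists (fun a q b => eps * A j a q b).
  have hNN : NN (Yo (fun a q b => eps * A j a q b)) = eps ^+ 2 * NN (Yo (A j)).
    exact: NN_scale.
  have hs : snorm d D j (fun a q b => eps * A j a q b) = eps * snA.
    by rewrite snE hNN sqrtrM ?sqr_ge0 // sqrtr_sqr ger0_norm ?ltW.
  split; first by rewrite hs.
  rewrite hrel -/tT0 hcan hs tE mulfK //; apply: lt0r_neq0; rewrite -tE //.
- rewrite ler_pdivlMr // mul1r; have := hBs (A j); rewrite -/tT0 -/snA.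
  by rewrite mulrAC.
Qed.
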